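(* Let $\mathfrak{g}$ be a semisimple Lie algebra, $A=\mathbb{C}\oplus A_+$ with $A_+=\bigoplus_{i>0}A_i$ a $\mathbb{Z}_{\ge0}$-graded commutative unital algebra, and let $x,y:A_+\to\mathbb{C}$ be two linearly independent linear maps vanishing on $A_+^2$. Let $\{e_i\}$ be an orthonormal basis of $\mathfrak{g}$ for the Killing form and $\{e^i\}$ the dual basis of $\mathfrak{g}^*$. For $u\in\mathfrak{g}^*$ and $z:A_+\to\mathbb{C}$ let $uz$ denote the linear functional $a\otimes b\mapsto u(a)z(b)$ on $\mathfrak{g}\otimes A_+$. Then $$\varphi_{x,y}=\sum_{i=1}^{\dim\mathfrak{g}}e^ix\wedge e^iy\in\mathrm{Hom}(\Lambda^2(\mathfrak{g}\otimes A_+),\mathbb{C})$$ is a cocycle in the relative Chevalley–Eilenberg complex $C^\bullet(\mathfrak{g}\otimes A,\mathfrak{g};\mathbb{C})=\mathrm{Hom}_{\mathfrak{g}}(\Lambda^\bullet(\mathfrak{g}\otimes A_+),\mathbb{C})$ whose class in $H^2(\mathfrak{g}\otimes A,\mathfrak{g};\mathbb{C})$ is nonzero.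
   Context: $\mathfrak{g}\otimes A$ is the current Lie algebra with bracket $[a\otimes u,b\otimes v]=[a,b]\otimes uv$; it contains $\mathfrak g=\mathfrak g\otimes 1$, and $(\mathfrak g\otimes A)/\mathfrak g\cong\mathfrak g\otimes A_+$ as $\mathfrak g$-modules. $H^\bullet(\mathfrak{g}\otimes A,\mathfrak{g};\mathbb{C})$ is relative Lie algebra cohomology with trivial coefficients. *)

(* Defs.v *)
From HB Require Import structures.
From mathcomp Require Import all_boot all_order all_algebra.
From mathcomp Require Import reals.
From mathcomp.real_closed Require Import complex.
Set Implicit Arguments. Unset Strict Implicit. Unset Printing Implicit Defensive.
Import GRing.Theory.
Local Open Scope ring_scope.

Definition lie_bracket (K : fieldType) (g : vectType K) (br : g -> g -> g) : Prop :=
  [/\ (forall (k : K) (a b c : g), br (k *: a + b) c = k *: br a c + br b c),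
      (forall (k : K) (a b c : g), br a (k *: b + c) = k *: br a b + br a c),
      (forall a : g, br a a = 0) &
      (forall a b c : g, br a (br b c) + br b (br c a) + br c (br a b) = 0)].

(* Killing form: kappa(a,b) = tr(ad a o ad b), trace computed in the basis vbasis fullv. *)
Definition killing (K : fieldType) (g : vectType K) (br : g -> g -> g) (a b : g) : K :=
  \sum_(i < \dim {: g}%VS)
     coord (vbasis fullv) i (br a (br b (tnth (vbasis fullv) i))).

Definition lie_ideal (K : fieldType) (g : vectType K) (br : g -> g -> g)
  (I : {vspace g}) : Prop :=
  forall a u : g, u \in I -> br a u \in I.

Definition derived (K : fieldType) (g : vectType K) (br : g -> g -> g)
  (I : {vspace g}) : {vspace g} :=
  <<[seq br u v | u <- (vbasis I : seq g), v <- (vbasis I : seq g)]>>%VS.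

Definition solvable_sub (K : fieldType) (g : vectType K) (br : g -> g -> g)
  (I : {vspace g}) : Prop :=
  exists n : nat, iter n (derived br) I = 0%VS.

Definition semisimple (K : fieldType) (g : vectType K) (br : g -> g -> g) : Prop :=
  forall I : {vspace g}, lie_ideal br I -> solvable_sub br I -> I = 0%VS.

(* p i is the projection of A onto its homogeneous component A_i. *)
Definition graded_algebra (K : fieldType) (A : comAlgType K) (p : nat -> A -> A) : Prop :=
  (forall i (k : K) (a b : A), p i (k *: a + b) = k *: p i a + p i b) /\
  [/\ (forall a : A, exists N : nat, forall i, (N <= i)%N -> p i a = 0),
      (forall (a : A) (N : nat), (forall i, (N <= i)%N -> p i a = 0) ->
           a = \sum_(i < N) p i a),
      (forall i j (a : A), p i (p j a) = (if i == j then p j a else 0)),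
      (forall i j (a b : A), p (i + j)%N (p i a * p j b) = p i a * p j b) &
      (p 0%N 1 = 1 /\ forall a : A, exists k : K, p 0%N a = k%:A)].

Definition Aplus (K : fieldType) (A : comAlgType K) (p : nat -> A -> A) (u : A) : Prop :=
  p 0%N u = 0.

(* linear functional A_+ -> K (only its values on A_+ matter) *)
Definition lin_Aplus (K : fieldType) (A : comAlgType K) (p : nat -> A -> A)
  (x : A -> K) : Prop :=
  forall (k : K) (u v : A), Aplus p u -> Aplus p v -> x (k *: u + v) = k * x u + x v.

Definition lin_indep2_Aplus (K : fieldType) (A : comAlgType K) (p : nat -> A -> A)
  (x y : A -> K) : Prop :=
  forall s t : K, (forall u : A, Aplus p u -> s * x u + t * y u = 0) -> s = 0 /\ t = 0.

(* ---------- relative Chevalley-Eilenberg cochains, degrees 1 and 2 ----------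
   A linear functional on g (x) A_+ is a bilinear map g x A_+ -> K;
   a linear functional on Lambda^2 (g (x) A_+) is a map
   c : g -> A -> g -> A -> K, bilinear in (a,u) and in (b,v) on A_+, with
   c a u b v = - c b v a u.  The relative complex consists of the
   g-invariant ones (trivial coefficients). *)

Definition rel_cochain1 (K : fieldType) (g : vectType K) (br : g -> g -> g)
  (A : comAlgType K) (p : nat -> A -> A) (psi : g -> A -> K) : Prop :=
  [/\ (forall (u : A), Aplus p u ->
         forall (k : K) (a b : g), psi (k *: a + b) u = k * psi a u + psi b u),
      (forall (a : g) (k : K) (u v : A), Aplus p u -> Aplus p v ->
         psi a (k *: u + v) = k * psi a u + psi a v) &
      (forall (z a : g) (u : A), Aplus p u -> psi (br z a) u = 0)].

Definition rel_cochain2 (K : fieldType) (g : vectType K) (br : g -> g -> g)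
  (A : comAlgType K) (p : nat -> A -> A) (c : g -> A -> g -> A -> K) : Prop :=
  [/\ (forall (u v : A) (b : g), Aplus p u -> Aplus p v ->
         forall (k : K) (a a' : g), c (k *: a + a') u b v = k * c a u b v + c a' u b v),
      (forall (a b : g) (k : K) (u u' v : A), Aplus p u -> Aplus p u' -> Aplus p v ->
         c a (k *: u + u') b v = k * c a u b v + c a u' b v),
      (forall (a b : g) (u v : A), Aplus p u -> Aplus p v -> c a u b v = - c b v a u) &
      (forall (z a b : g) (u v : A), Aplus p u -> Aplus p v ->
         c (br z a) u b v + c a u (br z b) v = 0)].

(* Chevalley-Eilenberg differential of a 2-cochain, on (a1 (x) u1, a2 (x) u2, a3 (x) u3):
   dc(p1,p2,p3) = - c([p1,p2],p3) + c([p1,p3],p2) - c([p2,p3],p1),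
   with [a (x) u, b (x) v] = [a,b] (x) uv. *)
Definition ce_d2 (K : fieldType) (g : vectType K) (br : g -> g -> g)
  (A : comAlgType K) (c : g -> A -> g -> A -> K)
  (a1 : g) (u1 : A) (a2 : g) (u2 : A) (a3 : g) (u3 : A) : K :=
  - c (br a1 a2) (u1 * u2) a3 u3 + c (br a1 a3) (u1 * u3) a2 u2
  - c (br a2 a3) (u2 * u3) a1 u1.

Definition ce_d1 (K : fieldType) (g : vectType K) (br : g -> g -> g)
  (A : comAlgType K) (psi : g -> A -> K) (a : g) (u : A) (b : g) (v : A) : K :=
  - psi (br a b) (u * v).

(* phi_{x,y} = sum_i e^i x /\ e^i y, with (f /\ h)(P,Q) = f(P) h(Q) - f(Q) h(P),
   (e^i z)(a (x) u) = e^i(a) z(u), e^i = i-th coordinate in the basis e. *)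
Definition phi_xy (K : fieldType) (g : vectType K) (n : nat) (e : n.-tuple g)
  (A : comAlgType K) (x y : A -> K) (a : g) (u : A) (b : g) (v : A) : K :=
  \sum_(i < n) (coord e i a * x u * (coord e i b * y v)
                - coord e i b * x v * (coord e i a * y u)).

(* Main.v *)
Require Import Defs.
From HB Require Import structures.
From mathcomp Require Import all_boot all_order all_algebra.
From mathcomp Require Import reals.
From mathcomp.real_closed Require Import complex.
From mathcomp Require Import ring.
From Stdlib Require Classical_Prop.
Set Implicit Arguments. Unset Strict Implicit. Unset Printing Implicit Defensive.
Import GRing.Theory.
Local Open Scope ring_scope.
Lemma lin_fun_sum (K : fieldType) (V : vectType K) (f : V -> V)
  (hf : forall k a b, f (k *: a + b) = k *: f a + f b) n (c : 'I_n -> K) (w : 'I_n -> V) :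
  f (\sum_i c i *: w i) = \sum_i c i *: f (w i).
Proof.
have f0 : f 0 = 0.
  have := hf 1 0 0; rewrite !scale1r addr0 => h.
  by apply: (@addrI _ (f 0)); rewrite addr0 -h.
have fadd : {morph f : a b / a + b}.
  by move=> a b; rewrite -[a]scale1r hf !scale1r.
rewrite (big_morph f fadd f0); apply: eq_bigr => i _.
by rewrite -[c i *: w i]addr0 hf f0 addr0.
Qed.

Lemma scal_fun_sum (K : fieldType) (V : vectType K) (f : V -> K)
  (hf : forall k a b, f (k *: a + b) = k * f a + f b) n (c : 'I_n -> K) (w : 'I_n -> V) :
  f (\sum_i c i *: w i) = \sum_i c i * f (w i).
Proof.
have f0 : f 0 = 0.
  have := hf 1 0 0; rewrite !scale1r addr0 !mul1r => h.
  by apply: (@addrI _ (f 0)); rewrite addr0 -h.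
have fadd : {morph f : a b / a + b}.
  by move=> a b; rewrite -[a]scale1r hf !scale1r mul1r.
rewrite (big_morph f fadd f0); apply: eq_bigr => i _.
by rewrite -[c i *: w i]addr0 hf f0 addr0.
Qed.

Section Lie.
Lemma br_props (K : fieldType) (V : vectType K) (br : V -> V -> V) :
  lie_bracket br ->
  [/\ (forall a b, br a b = - br b a),
      (forall a b c, br a (b - c) = br a b - br a c),
      (forall a b c, br (a - b) c = br a c - br b c) &
      (forall z a w, br (br z a) w = br z (br a w) - br a (br z w))].
Proof.
case=> l1 l2 al jac.
have add1 : forall a b c, br (a + b) c = br a c + br b c.
  by move=> a b c; rewrite -[a]scale1r l1 !scale1r.
have add2 : forall a b c, br a (b + c) = br a b + br a c.
  by move=> a b c; rewrite -[b]scale1r l2 !scale1r.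
have opp2 : forall a b, br a (- b) = - br a b.
  move=> a b; have z2 : br a 0 = 0.
    by apply: (@addrI _ (br a 0)); rewrite -add2 !addr0.
  by apply/eqP; rewrite -addr_eq0 -add2 addNr z2.
have opp1 : forall a b, br (- a) b = - br a b.
  move=> a b; have z1 : br 0 b = 0.
    by apply: (@addrI _ (br 0 b)); rewrite -add1 !addr0.
  by apply/eqP; rewrite -addr_eq0 -add1 addNr z1.
have anti : forall a b, br a b = - br b a.
  move=> a b; have := al (a + b); rewrite add1 !add2 !al add0r addr0.
  by move/eqP; rewrite addr_eq0 => /eqP.
split => //.
- by move=> a b c; rewrite add2 opp2.
- by move=> a b c; rewrite add1 opp1.
move=> z a w; have := jac z a w.
rewrite [br w (br z a)]anti [br w z]anti opp2 => /eqP.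
rewrite subr_eq0 => /eqP <-.
by [].
Qed.
End Lie.
Definition trf (K : fieldType) (V : vectType K) (f : V -> V) : K :=
  \sum_(i < \dim (fullv : {vspace V}))
     coord (vbasis fullv) i (f (tnth (vbasis fullv) i)).

Lemma trf_expand (K : fieldType) (V : vectType K) (f h : V -> V)
  (hf : forall k a b, f (k *: a + b) = k *: f a + f b) :
  trf (fun v => f (h v)) =
  \sum_(i < \dim (fullv : {vspace V})) \sum_(j < \dim (fullv : {vspace V}))
     coord (vbasis fullv) j (h (tnth (vbasis fullv) i)) *
     coord (vbasis fullv) i (f (tnth (vbasis fullv) j)).
Proof.
rewrite /trf; apply: eq_bigr => i _.
rewrite {1}(coord_vbasis (memvf (h (tnth (vbasis fullv) i)))).
rewrite lin_fun_sum // linear_sum; apply: eq_bigr => j _.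
by rewrite linearZ /= !(tnth_nth 0).
Qed.

Lemma trf_cyc (K : fieldType) (V : vectType K) (f h : V -> V)
  (hf : forall k a b, f (k *: a + b) = k *: f a + f b)
  (hh : forall k a b, h (k *: a + b) = k *: h a + h b) :
  trf (fun v => f (h v)) = trf (fun v => h (f v)).
Proof.
rewrite !trf_expand // exchange_big; apply: eq_bigr => i _.
by apply: eq_bigr => j _; rewrite mulrC.
Qed.

Lemma killing_inv (K : fieldType) (V : vectType K) (br : V -> V -> V) :
  lie_bracket br -> forall z a b,
  killing br (br z a) b + killing br a (br z b) = 0.
Proof.
move=> Hl z a b; have [anti sub2 sub1 jac'] := br_props Hl.
case: Hl => l1 l2 _ _.
rewrite /killing -big_split /=.
transitivity (trf (fun v => br z (br a (br b v))) - trf (fun v => br a (br b (br z v)))).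
  rewrite /trf -sumrB; apply: eq_bigr => i _.
  rewrite jac' [br (br z b) _]jac' sub2 !linearB /=; ring.
have hh : forall k u w, br a (br b (k *: u + w)) = k *: br a (br b u) + br a (br b w).
  by move=> k u w; rewrite !l2.
have := @trf_cyc K V (br z) (fun v => br a (br b v)) (fun k u w => l2 k z u w) hh.
by move=> /= ->; rewrite subrr.
Qed.

Lemma killing_lin1 (K : fieldType) (V : vectType K) (br : V -> V -> V) :
  lie_bracket br -> forall b k a a',
  killing br (k *: a + a') b = k * killing br a b + killing br a' b.
Proof.
case=> l1 l2 _ _ b k a a'; rewrite /killing mulr_sumr -big_split /=.
by apply: eq_bigr => i _; rewrite l1 linearD linearZ.
Qed.

Lemma killing_lin2 (K : fieldType) (V : vectType K) (br : V -> V -> V) :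
  lie_bracket br -> forall a k b b',
  killing br a (k *: b + b') = k * killing br a b + killing br a b'.
Proof.
case=> l1 l2 _ _ a k b b'; rewrite /killing mulr_sumr -big_split /=.
by apply: eq_bigr => i _; rewrite l1 l2 linearD linearZ.
Qed.

Lemma killing_coord (K : fieldType) (V : vectType K) (br : V -> V -> V)
  (e : (\dim (fullv : {vspace V})).-tuple V) :
  lie_bracket br -> basis_of fullv e ->
  (forall i j, killing br (tnth e i) (tnth e j) = (i == j)%:R) ->
  forall a b, killing br a b = \sum_i coord e i a * coord e i b.
Proof.
move=> Hl hb ho a b.
have kb : forall c, killing br c b = \sum_j coord e j b * killing br c e`_j.
  move=> c; rewrite {1}(coord_basis hb (memvf b)).
  exact: (scal_fun_sum (killing_lin2 Hl c)).
rewrite {1}(coord_basis hb (memvf a)).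
rewrite (scal_fun_sum (killing_lin1 Hl b)); apply: eq_bigr => i _.
congr (_ * _); rewrite kb (bigD1 i) //= big1 ?addr0.
  by rewrite -!(tnth_nth 0) ho eqxx mulr1.
by move=> j /negbTE nij; rewrite -!(tnth_nth 0) ho eq_sym nij mulr0.
Qed.

Lemma Aplus_mul (K : fieldType) (A : comAlgType K) (p : nat -> A -> A) (u v : A) :
  graded_algebra p -> Aplus p u -> Aplus p v -> Aplus p (u * v).
Proof.
case=> plin [fin dec proj mul [p01 p0k]] hu hv.
have padd : forall i, {morph p i : a b / a + b}.
  by move=> i a b; rewrite -[a]scale1r plin !scale1r.
have p0 : forall i, p i 0 = 0.
  move=> i; have := plin i 1 0 0; rewrite !scale1r addr0 => h.
  by apply: (@addrI _ (p i 0)); rewrite addr0 -h.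
case: (fin u) => N1 h1; case: (fin v) => N2 h2.
rewrite /Aplus (dec u (maxn N1 N2)); last first.
  by move=> i hi; apply: h1; apply: leq_trans (leq_maxl _ _) hi.
rewrite (dec v (maxn N1 N2)); last first.
  by move=> i hi; apply: h2; apply: leq_trans (leq_maxr _ _) hi.
rewrite mulr_suml (big_morph _ (padd 0%N) (p0 0%N)); apply: big1 => i _.
rewrite mulr_sumr (big_morph _ (padd 0%N) (p0 0%N)); apply: big1 => j _.
case: (posnP i) => [i0|ipos].
  by rewrite i0 hu mul0r p0.
rewrite -mul proj; case: ifP => // /eqP/esym/eqP; rewrite addn_eq0 => /andP[/eqP i0 _].
by move: ipos; rewrite i0.
Qed.
Theorem lemma4p14 (R : realType) (g : vectType R[i]) (br : g -> g -> g)
  (A : comAlgType R[i]) (p : nat -> A -> A) (x y : A -> R[i])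
  (e : (\dim {: g}%VS).-tuple g) :
  lie_bracket br -> semisimple br -> (0 < \dim {: g}%VS)%N ->
  graded_algebra p ->
  lin_Aplus p x -> lin_Aplus p y -> lin_indep2_Aplus p x y ->
  (forall u v : A, Aplus p u -> Aplus p v -> x (u * v) = 0) ->
  (forall u v : A, Aplus p u -> Aplus p v -> y (u * v) = 0) ->
  basis_of fullv e ->
  (forall i j : 'I_(\dim {: g}%VS),
      killing br (tnth e i) (tnth e j) = (i == j)%:R) ->
  [/\ rel_cochain2 br p (phi_xy e x y),
      (forall (a1 a2 a3 : g) (u1 u2 u3 : A),
          Aplus p u1 -> Aplus p u2 -> Aplus p u3 ->
          ce_d2 br (phi_xy e x y) a1 u1 a2 u2 a3 u3 = 0) &
      ~ (exists psi : g -> A -> R[i],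
           rel_cochain1 br p psi /\
           forall (a b : g) (u v : A), Aplus p u -> Aplus p v ->
             phi_xy e x y a u b v = ce_d1 br psi a u b v)].
Proof.
move=> Hl _ dimpos Hg hx hy hind hx0 hy0 hb ho.
have kc := killing_coord Hl hb ho.
have phiE : forall a u b v, phi_xy e x y a u b v = killing br a b * (x u * y v - x v * y u).
  move=> a u b v; rewrite kc /phi_xy mulr_suml; apply: eq_bigr => i _; ring.
have ksym : forall a b, killing br a b = killing br b a.
  by move=> a b; rewrite !kc; apply: eq_bigr => i _; rewrite mulrC.
split.
- split.
  + by move=> u v b hu hv k a a'; rewrite !phiE killing_lin1 //; ring.
  + by move=> a b k u u' v hu hu' hv; rewrite !phiE (hx k u u') // (hy k u u') //; ring.
  + by move=> a b u v hu hv; rewrite !phiE ksym; ring.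
  + by move=> z a b u v hu hv; rewrite !phiE -mulrDl killing_inv // mul0r.
- move=> a1 a2 a3 u1 u2 u3 h1 h2 h3.
  by rewrite /ce_d2 !phiE !hx0 // !hy0 //; ring.
case=> psi [[ps1 ps2 ps3] hpsi].
pose i0 : 'I_(\dim {: g}%VS) := Ordinal dimpos.
pose e0 := tnth e i0.
have D0 : forall u v, Aplus p u -> Aplus p v -> x u * y v - x v * y u = 0.
  move=> u v hu hv; have := hpsi e0 e0 u v hu hv.
  rewrite phiE ho eqxx mul1r /ce_d1 ps3 ?oppr0 //.
  exact: Aplus_mul Hg hu hv.
case: (Classical_Prop.classic (exists v0, Aplus p v0 /\ y v0 != 0)) => [[v0 [hv0 yv0]] | hno].
  have := hind 1 (- (x v0 / y v0)).
  case.
    move=> u hu; have := D0 u v0 hu hv0; move/eqP; rewrite subr_eq0 => /eqP h.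
    rewrite mul1r mulNr; apply/eqP; rewrite subr_eq0; apply/eqP.
    by rewrite mulrAC -h mulfK.
  by move=> /eqP; rewrite oner_eq0.
have := hind 0 1.
case.
  move=> u hu; rewrite mul0r add0r mul1r.
  case: (eqVneq (y u) 0) => // yu.
  by case: hno; exists u; split.
by move=> _ /eqP; rewrite oner_eq0.
Qed.
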